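(* Let $v$ be a quadratic vector field on $\mathbb{C}^2$ having four distinct non-degenerate singular points $p_1,p_2,p_3,p_4$. Then the position $p_4$ and the pair $(\operatorname{tr}Dv(p_4),\det Dv(p_4))$ are uniquely determined by the positions $p_1,p_2,p_3$ together with the pairs $(\operatorname{tr}Dv(p_k),\det Dv(p_k))$ for $k=1,2,3$. In particular, if two such quadratic vector fields share three singular points, with the same trace and determinant of the linearization at each of them, then they share the fourth singular point, with the same trace and determinant there as well.
   Context: A quadratic vector field is $v=P\,\partial_x+Q\,\partial_y$ with $P,Q\in\mathbb{C}[x,y]$ of degree at most $2$. $Dv$ denotes the Jacobian matrix of $(P,Q)$. A singular point $p$ is a common zero of $P,Q$, and it is non-degenerate if $\det Dv(p)\ne0$. *)

(* Defs.v *)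
From HB Require Import structures.
From mathcomp Require Import all_boot all_order all_algebra.
Set Implicit Arguments. Unset Strict Implicit. Unset Printing Implicit Defensive.
Import Order.TTheory GRing.Theory Num.Theory.
Local Open Scope ring_scope.

Record qpoly (R : nzRingType) := QPoly {
  c00 : R; c10 : R; c01 : R; c20 : R; c11 : R; c02 : R }.

Definition qeval (R : nzRingType) (f : qpoly R) (p : R * R) : R :=
  c00 f + c10 f * p.1 + c01 f * p.2
  + c20 f * p.1 ^+ 2 + c11 f * p.1 * p.2 + c02 f * p.2 ^+ 2.

Definition qdx (R : nzRingType) (f : qpoly R) (p : R * R) : R :=
  c10 f + 2%:R * c20 f * p.1 + c11 f * p.2.
Definition qdy (R : nzRingType) (f : qpoly R) (p : R * R) : R :=
  c01 f + c11 f * p.1 + 2%:R * c02 f * p.2.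

Record qvf (R : nzRingType) := QVF { vP : qpoly R; vQ : qpoly R }.

Definition Dv (R : nzRingType) (v : qvf R) (p : R * R) : 'M[R]_2 :=
  \matrix_(i < 2, j < 2)
    (let f := if i == 0 then vP v else vQ v in
     if j == 0 then qdx f p else qdy f p).

Definition singular (R : nzRingType) (v : qvf R) (p : R * R) : Prop :=
  qeval (vP v) p = 0 /\ qeval (vQ v) p = 0.

Definition nondegenerate (R : comNzRingType) (v : qvf R) (p : R * R) : Prop :=
  \det (Dv v p) != 0.

Definition four_nondeg_sing (R : numClosedFieldType) (v : qvf R)
  (p1 p2 p3 p4 : R * R) : Prop :=
  uniq [:: p1; p2; p3; p4] /\
  (forall p, p \in [:: p1; p2; p3; p4] -> singular v p /\ nondegenerate v p).

(* Main.v *)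
Require Import Defs.
From HB Require Import structures.
From mathcomp Require Import all_boot all_order all_algebra.
From mathcomp Require Import ring.
Import Order.TTheory GRing.Theory Num.Theory.
Set Implicit Arguments. Unset Strict Implicit. Unset Printing Implicit Defensive.
Local Open Scope ring_scope.

Section Helpers.
Variable R : fieldType.
Implicit Types (f g : Defs.qpoly R) (a b c p : R * R).

Definition Jq f g p := qdx f p * qdy g p - qdy f p * qdx g p.
Definition Dt a b c := (b.1 - a.1) * (c.2 - a.2) - (b.2 - a.2) * (c.1 - a.1).
Definition qf f (x y : R) := c20 f * x ^+ 2 + c11 f * x * y + c02 f * y ^+ 2.

Lemma eq0T (x y : R) : y = 0 -> x = y -> x = 0.
Proof. by move=> -> ->. Qed.

Lemma taylor f a p : qeval f p = qeval f a +
  (qdx f a * (p.1 - a.1) + qdy f a * (p.2 - a.2)) + qf f (p.1 - a.1) (p.2 - a.2).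
Proof. rewrite /qeval /qdx /qdy /qf; ring. Qed.

Lemma core (A B C ux uy d1 d2 e1 e2 : R) : d1 != 0 -> d1 * e2 = d2 * e1 ->
  ~~ ((e1 == 0) && (e2 == 0)) -> ~~ ((e1 - d1 == 0) && (e2 - d2 == 0)) ->
  ux * d1 + uy * d2 + (A * d1 ^+ 2 + B * d1 * d2 + C * d2 ^+ 2) = 0 ->
  ux * e1 + uy * e2 + (A * e1 ^+ 2 + B * e1 * e2 + C * e2 ^+ 2) = 0 ->
  ux * d1 + uy * d2 = 0.
Proof.
move=> d1nz hdet hne0 hned H1 H2.
set t := e1 / d1.
have he1 : e1 = t * d1 by rewrite /t; field.
have he2 : e2 = t * d2.
  by rewrite /t -[e2](mulKf d1nz) hdet; field.
clearbody t.
have E : t * (t - 1) * (A * d1 ^+ 2 + B * d1 * d2 + C * d2 ^+ 2) =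
  (ux * e1 + uy * e2 + (A * e1 ^+ 2 + B * e1 * e2 + C * e2 ^+ 2))
  - t * (ux * d1 + uy * d2 + (A * d1 ^+ 2 + B * d1 * d2 + C * d2 ^+ 2)).
  by rewrite he1 he2; ring.
rewrite H1 H2 mulr0 subr0 in E.
move/eqP: E; rewrite !mulf_eq0.
case/orP => [/orP [] /eqP ht | /eqP hq].
- by move: hne0; rewrite he1 he2 ht !mul0r eqxx.
- have t1 : t = 1 by apply/eqP; rewrite -subr_eq0 ht.
  by move: hned; rewrite he1 he2 t1 !mul1r !subrr eqxx.
- by apply: (eq0T H1); rewrite hq addr0.
Qed.

Lemma pairneq a b : a != b -> (a.1 - b.1 != 0) || (a.2 - b.2 != 0).
Proof.
case: a b => [a1 a2] [b1 b2] /=; rewrite !subr_eq0 xpair_eqE negb_and //.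
Qed.

Lemma pairneq' a b : a != b -> (b.1 - a.1 != 0) || (b.2 - a.2 != 0).
Proof. by rewrite eq_sym; apply: pairneq. Qed.

Lemma colin f g a b c :
  qeval f a = 0 -> qeval f b = 0 -> qeval f c = 0 ->
  qeval g a = 0 -> qeval g b = 0 -> qeval g c = 0 ->
  a != b -> a != c -> b != c -> Jq f g a != 0 -> Dt a b c != 0.
Proof.
move=> fa fb fc ga gb gc ab ac bc Jnz; apply/negP => /eqP HD.
have tf := taylor f a b; have tf' := taylor f a c.
have tg := taylor g a b; have tg' := taylor g a c.
rewrite fa fb add0r in tf; rewrite fa fc add0r in tf'.
rewrite ga gb add0r in tg; rewrite ga gc add0r in tg'.
move: tf tf' tg tg'; rewrite /qf.
set d1 := b.1 - a.1; set d2 := b.2 - a.2; set e1 := c.1 - a.1; set e2 := c.2 - a.2.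
move=> tf tf' tg tg'.
have hdet : d1 * e2 = d2 * e1 by apply/eqP; rewrite -subr_eq0 -HD.
have hne0 : ~~ ((e1 == 0) && (e2 == 0)).
  by move: (pairneq' ac); rewrite /e1 /e2 negb_and.
have hned : ~~ ((e1 - d1 == 0) && (e2 - d2 == 0)).
  have -> : e1 - d1 = c.1 - b.1 by rewrite /e1 /d1; ring.
  have -> : e2 - d2 = c.2 - b.2 by rewrite /e2 /d2; ring.
  by move: (pairneq' bc); rewrite negb_and.
have [Sf Sg] : qdx f a * d1 + qdy f a * d2 = 0 /\ qdx g a * d1 + qdy g a * d2 = 0.
  have [d1nz|/negPn/eqP d10] := boolP (d1 != 0).
    by split; [apply: (core (A := c20 f) (B := c11 f) (C := c02 f) d1nz hdet hne0 hned (esym tf) (esym tf')) |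
      apply: (core (A := c20 g) (B := c11 g) (C := c02 g) d1nz hdet hne0 hned (esym tg) (esym tg'))].
  have d2nz : d2 != 0.
    by move: (pairneq' ab); rewrite -/d1 -/d2 d10 eqxx.
  have hdet' : d2 * e1 = d1 * e2 by rewrite hdet.
  have hne0' : ~~ ((e2 == 0) && (e1 == 0)) by rewrite andbC.
  have hned' : ~~ ((e2 - d2 == 0) && (e1 - d1 == 0)) by rewrite andbC.
  split.
  + have h1 : qdy f a * d2 + qdx f a * d1 + (c02 f * d2 ^+ 2 + c11 f * d2 * d1 + c20 f * d1 ^+ 2) = 0.
      by apply: (eq0T (esym tf)); ring.
    have h2 : qdy f a * e2 + qdx f a * e1 + (c02 f * e2 ^+ 2 + c11 f * e2 * e1 + c20 f * e1 ^+ 2) = 0.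
      by apply: (eq0T (esym tf')); ring.
    have := core d2nz hdet' hne0' hned' h1 h2.
    by rewrite addrC.
  + have h1 : qdy g a * d2 + qdx g a * d1 + (c02 g * d2 ^+ 2 + c11 g * d2 * d1 + c20 g * d1 ^+ 2) = 0.
      by apply: (eq0T (esym tg)); ring.
    have h2 : qdy g a * e2 + qdx g a * e1 + (c02 g * e2 ^+ 2 + c11 g * e2 * e1 + c20 g * e1 ^+ 2) = 0.
      by apply: (eq0T (esym tg')); ring.
    have := core d2nz hdet' hne0' hned' h1 h2.
    by rewrite addrC.
have J1 : Jq f g a * d1 = 0.
  by apply: (eq0T (y := qdy g a * (qdx f a * d1 + qdy f a * d2) - qdy f a * (qdx g a * d1 + qdy g a * d2))); [rewrite Sf Sg; ring | rewrite /Jq; ring].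
have J2 : Jq f g a * d2 = 0.
  by apply: (eq0T (y := qdx f a * (qdx g a * d1 + qdy g a * d2) - qdx g a * (qdx f a * d1 + qdy f a * d2))); [rewrite Sf Sg; ring | rewrite /Jq; ring].
move: (pairneq' ab); rewrite -/d1 -/d2.
move/eqP: J1; move/eqP: J2; rewrite !mulf_eq0 (negbTE Jnz) /=.
by move=> /eqP -> /eqP ->; rewrite eqxx.
Qed.


Lemma qzero (A B C x2 y2 x3 y3 x4 y4 : R) :
  x2 * y3 - y2 * x3 != 0 -> x2 * y4 - y2 * x4 != 0 -> x3 * y4 - y3 * x4 != 0 ->
  A * x2 ^+ 2 + B * x2 * y2 + C * y2 ^+ 2 = 0 ->
  A * x3 ^+ 2 + B * x3 * y3 + C * y3 ^+ 2 = 0 ->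
  A * x4 ^+ 2 + B * x4 * y4 + C * y4 ^+ 2 = 0 ->
  [/\ A = 0, B = 0 & C = 0].
Proof.
move=> h23 h24 h34 E2 E3 E4.
set d23 := x2 * y3 - y2 * x3 in h23; set d24 := x2 * y4 - y2 * x4 in h24.
set d34 := x3 * y4 - y3 * x4 in h34.
have V : d23 * d24 * d34 != 0 by rewrite !mulf_neq0.
have HA : A * (d23 * d24 * d34) = y3 * y4 * d34 * (A * x2 ^+ 2 + B * x2 * y2 + C * y2 ^+ 2)
  - y2 * y4 * d24 * (A * x3 ^+ 2 + B * x3 * y3 + C * y3 ^+ 2)
  + y2 * y3 * d23 * (A * x4 ^+ 2 + B * x4 * y4 + C * y4 ^+ 2).
  by rewrite /d23 /d24 /d34; ring.
have HB : B * (d23 * d24 * d34) = - d34 * (x3 * y4 + x4 * y3) * (A * x2 ^+ 2 + B * x2 * y2 + C * y2 ^+ 2)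
  + d24 * (x2 * y4 + x4 * y2) * (A * x3 ^+ 2 + B * x3 * y3 + C * y3 ^+ 2)
  - d23 * (x2 * y3 + x3 * y2) * (A * x4 ^+ 2 + B * x4 * y4 + C * y4 ^+ 2).
  by rewrite /d23 /d24 /d34; ring.
have HC : C * (d23 * d24 * d34) = x3 * x4 * d34 * (A * x2 ^+ 2 + B * x2 * y2 + C * y2 ^+ 2)
  - x2 * x4 * d24 * (A * x3 ^+ 2 + B * x3 * y3 + C * y3 ^+ 2)
  + x2 * x3 * d23 * (A * x4 ^+ 2 + B * x4 * y4 + C * y4 ^+ 2).
  by rewrite /d23 /d24 /d34; ring.
rewrite E2 E3 E4 !mulr0 !(addr0, subr0, oppr0) in HA HB HC.
by split; apply: (mulIf V); rewrite mul0r.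
Qed.

Definition lineq a b : (R * R) * R :=
  ((- (b.2 - a.2), b.1 - a.1), - ((- (b.2 - a.2)) * a.1 + (b.1 - a.1) * a.2)).
Definition mulL (l1 l2 : (R * R) * R) : Defs.qpoly R :=
  QPoly (l1.2 * l2.2) (l1.2 * l2.1.1 + l2.2 * l1.1.1) (l1.2 * l2.1.2 + l2.2 * l1.1.2)
        (l1.1.1 * l2.1.1) (l1.1.1 * l2.1.2 + l1.1.2 * l2.1.1) (l1.1.2 * l2.1.2).
Definition Fq p1 p2 p3 p4 := mulL (lineq p1 p2) (lineq p3 p4).
Definition Gq p1 p2 p3 p4 := mulL (lineq p1 p3) (lineq p2 p4).
Definition JFG p1 p2 p3 p4 p := Jq (Fq p1 p2 p3 p4) (Gq p1 p2 p3 p4) p.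

Lemma Kid p1 p2 p3 p4 :
  let K := Dt p1 p2 p3 * Dt p1 p2 p4 * Dt p1 p3 p4 * Dt p2 p3 p4 in
  [/\ Dt p2 p3 p4 * JFG p1 p2 p3 p4 p1 = K,
      - Dt p1 p3 p4 * JFG p1 p2 p3 p4 p2 = K,
      Dt p1 p2 p4 * JFG p1 p2 p3 p4 p3 = K &
      - Dt p1 p2 p3 * JFG p1 p2 p3 p4 p4 = K].
Proof.
case: p1 p2 p3 p4 => [x1 y1] [x2 y2] [x3 y3] [x4 y4].
rewrite /JFG /Jq /Dt /Fq /Gq /mulL /lineq /qdx /qdy /=.
split; ring.
Qed.


Lemma FGzero p1 p2 p3 p4 :
  [/\ qeval (Fq p1 p2 p3 p4) p1 = 0, qeval (Fq p1 p2 p3 p4) p2 = 0,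
      qeval (Fq p1 p2 p3 p4) p3 = 0 & qeval (Fq p1 p2 p3 p4) p4 = 0] /\
  [/\ qeval (Gq p1 p2 p3 p4) p1 = 0, qeval (Gq p1 p2 p3 p4) p2 = 0,
      qeval (Gq p1 p2 p3 p4) p3 = 0 & qeval (Gq p1 p2 p3 p4) p4 = 0].
Proof.
case: p1 p2 p3 p4 => [x1 y1] [x2 y2] [x3 y3] [x4 y4].
rewrite /qeval /Fq /Gq /mulL /lineq /=.
by split; split; ring.
Qed.

Definition qcomb f (F G : Defs.qpoly R) (a b : R) : Defs.qpoly R :=
  QPoly (c00 f - a * c00 F - b * c00 G) (c10 f - a * c10 F - b * c10 G)
        (c01 f - a * c01 F - b * c01 G) (c20 f - a * c20 F - b * c20 G)
        (c11 f - a * c11 F - b * c11 G) (c02 f - a * c02 F - b * c02 G).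

Lemma pencil f p1 p2 p3 p4 :
  qeval f p1 = 0 -> qeval f p2 = 0 -> qeval f p3 = 0 -> qeval f p4 = 0 ->
  Dt p1 p2 p3 != 0 -> Dt p1 p2 p4 != 0 -> Dt p1 p3 p4 != 0 ->
  JFG p1 p2 p3 p4 p1 != 0 ->
  exists (a b : R), forall p,
    qdx f p = a * qdx (Fq p1 p2 p3 p4) p + b * qdx (Gq p1 p2 p3 p4) p /\
    qdy f p = a * qdy (Fq p1 p2 p3 p4) p + b * qdy (Gq p1 p2 p3 p4) p.
Proof.
move=> f1 f2 f3 f4 h23 h24 h34.
have [[F1 F2 F3 F4] [G1 G2 G3 G4]] := FGzero p1 p2 p3 p4.
move: F1 F2 F3 F4 G1 G2 G3 G4.
rewrite /JFG /Jq.
set F := Fq p1 p2 p3 p4; set G := Gq p1 p2 p3 p4.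
move=> F1 F2 F3 F4 G1 G2 G3 G4 Jnz.
set a := (qdx f p1 * qdy G p1 - qdy f p1 * qdx G p1) /
   (qdx F p1 * qdy G p1 - qdy F p1 * qdx G p1).
set b := (qdx F p1 * qdy f p1 - qdy F p1 * qdx f p1) /
   (qdx F p1 * qdy G p1 - qdy F p1 * qdx G p1).
exists a, b.
set h := qcomb f F G a b.
have hev p : qeval h p = qeval f p - a * qeval F p - b * qeval G p.
  by rewrite /h /qcomb /qeval /=; ring.
have hdx p : qdx h p = qdx f p - a * qdx F p - b * qdx G p.
  by rewrite /h /qcomb /qdx /=; ring.
have hdy p : qdy h p = qdy f p - a * qdy F p - b * qdy G p.
  by rewrite /h /qcomb /qdy /=; ring.
have gx : qdx h p1 = 0.
  by rewrite hdx /a /b; field.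
have gy : qdy h p1 = 0.
  by rewrite hdy /a /b; field.
have hz p : qeval h p = 0 -> qf h (p.1 - p1.1) (p.2 - p1.2) = 0.
  move=> hp; have := taylor h p1 p.
  by rewrite hp hev f1 F1 G1 gx gy !mulr0 !subr0 !mul0r !add0r => /esym.
have [] := qzero h23 h24 h34 (hz _ _) (hz _ _) (hz _ _).
- by rewrite hev f2 F2 G2 !mulr0 !subr0.
- by rewrite hev f3 F3 G3 !mulr0 !subr0.
- by rewrite hev f4 F4 G4 !mulr0 !subr0.
move=> A0 B0 C0 p.
have ex : qdx h p = qdx h p1 + 2%:R * c20 h * (p.1 - p1.1) + c11 h * (p.2 - p1.2).
  by rewrite /qdx; ring.
have ey : qdy h p = qdy h p1 + c11 h * (p.1 - p1.1) + 2%:R * c02 h * (p.2 - p1.2).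
  by rewrite /qdy; ring.
rewrite A0 B0 C0 gx gy !mulr0 !mul0r !addr0 hdx hdy in ex ey.
split; apply/eqP; rewrite -subr_eq0; apply/eqP.
  by apply: (eq0T ex); ring.
by apply: (eq0T ey); ring.
Qed.


Lemma EJ f g p1 p2 p3 p4 :
  qeval f p1 = 0 -> qeval f p2 = 0 -> qeval f p3 = 0 -> qeval f p4 = 0 ->
  qeval g p1 = 0 -> qeval g p2 = 0 -> qeval g p3 = 0 -> qeval g p4 = 0 ->
  p1 != p2 -> p1 != p3 -> p1 != p4 -> p2 != p3 -> p2 != p4 -> p3 != p4 ->
  Jq f g p1 != 0 -> Jq f g p2 != 0 -> Jq f g p3 != 0 -> Jq f g p4 != 0 ->
  exists C, C != 0 /\
  [/\ Dt p2 p3 p4 * Jq f g p1 = C, - Dt p1 p3 p4 * Jq f g p2 = C,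
      Dt p1 p2 p4 * Jq f g p3 = C & - Dt p1 p2 p3 * Jq f g p4 = C].
Proof.
move=> f1 f2 f3 f4 g1 g2 g3 g4 d12 d13 d14 d23 d24 d34 J1 J2 J3 J4.
have h123 := colin f1 f2 f3 g1 g2 g3 d12 d13 d23 J1.
have h124 := colin f1 f2 f4 g1 g2 g4 d12 d14 d24 J1.
have h134 := colin f1 f3 f4 g1 g3 g4 d13 d14 d34 J1.
have h234 := colin f2 f3 f4 g2 g3 g4 d23 d24 d34 J2.
have [K1 K2 K3 K4] := Kid p1 p2 p3 p4.
set K := Dt p1 p2 p3 * Dt p1 p2 p4 * Dt p1 p3 p4 * Dt p2 p3 p4 in K1 K2 K3 K4.
have Knz : K != 0 by rewrite !mulf_neq0.
have JF1 : JFG p1 p2 p3 p4 p1 != 0.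
  by apply/eqP => E; move: Knz; rewrite -K1 E mulr0 eqxx.
have [aP [bP HP]] := pencil f1 f2 f3 f4 h123 h124 h134 JF1.
have [aQ [bQ HQ]] := pencil g1 g2 g3 g4 h123 h124 h134 JF1.
have JJ p : Jq f g p = (aP * bQ - bP * aQ) * JFG p1 p2 p3 p4 p.
  rewrite /JFG /Jq; have [-> ->] := HP p; have [-> ->] := HQ p.
  by ring.
exists ((aP * bQ - bP * aQ) * K); split.
  by rewrite -K1 mulrCA -JJ mulf_neq0.
by split; rewrite JJ mulrCA ?K1 ?K2 ?K3 ?K4.
Qed.

Lemma EJsum f g p1 p2 p3 p4 :
  qeval f p1 = 0 -> qeval f p2 = 0 -> qeval f p3 = 0 -> qeval f p4 = 0 ->
  qeval g p1 = 0 -> qeval g p2 = 0 -> qeval g p3 = 0 -> qeval g p4 = 0 ->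
  p1 != p2 -> p1 != p3 -> p1 != p4 -> p2 != p3 -> p2 != p4 -> p3 != p4 ->
  Jq f g p1 != 0 -> Jq f g p2 != 0 -> Jq f g p3 != 0 -> Jq f g p4 != 0 ->
  let J := Jq f g in let T p := qdx f p + qdy g p in
  [/\ (J p1)^-1 + (J p2)^-1 + (J p3)^-1 + (J p4)^-1 = 0,
      p1.1 / J p1 + p2.1 / J p2 + p3.1 / J p3 + p4.1 / J p4 = 0,
      p1.2 / J p1 + p2.2 / J p2 + p3.2 / J p3 + p4.2 / J p4 = 0 &
      T p1 / J p1 + T p2 / J p2 + T p3 / J p3 + T p4 / J p4 = 0].
Proof.
move=> f1 f2 f3 f4 g1 g2 g3 g4 d12 d13 d14 d23 d24 d34 J1 J2 J3 J4 J T.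
have [C [Cnz [E1 E2 E3 E4]]] := EJ f1 f2 f3 f4 g1 g2 g3 g4 d12 d13 d14 d23 d24 d34 J1 J2 J3 J4.
have inv (l x : R) : l * x = C -> x != 0 -> x^-1 = l / C.
  move=> E xnz; have lnz : l != 0.
    by apply: contraNneq Cnz => l0; rewrite -E l0 mul0r.
  rewrite -E; field.
  by rewrite lnz xnz.
rewrite /J /T.
rewrite (inv _ _ E1 J1) (inv _ _ E2 J2) (inv _ _ E3 J3) (inv _ _ E4 J4).
rewrite /Dt /qdx /qdy; split; ring.
Qed.

End Helpers.

Lemma detE (R : numClosedFieldType) (v : qvf R) p :
  \det (Dv v p) = Jq (vP v) (vQ v) p.
Proof.
rewrite (expand_det_row _ ord0) !big_ord_recl big_ord0 /cofactor.
by rewrite !det_mx11 !mxE /= /Jq; ring.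
Qed.

Lemma trE (R : numClosedFieldType) (v : qvf R) p :
  \tr (Dv v p) = qdx (vP v) p + qdy (vQ v) p.
Proof. by rewrite /mxtrace !big_ord_recl big_ord0 !mxE /= addr0. Qed.

Lemma uniq4 (T : eqType) (a b c d : T) : uniq [:: a; b; c; d] ->
  [/\ a != b, a != c & a != d] /\ [/\ b != c, b != d & c != d].
Proof.
rewrite /= !inE !negb_or.
by case/and4P => /and3P [? ? ?] /andP [? ?] ? _.
Qed.

Lemma unpack (R : numClosedFieldType) (v : qvf R) p1 p2 p3 p4 :
  four_nondeg_sing v p1 p2 p3 p4 ->
  [/\ [/\ qeval (vP v) p1 = 0, qeval (vP v) p2 = 0, qeval (vP v) p3 = 0 & qeval (vP v) p4 = 0],
      [/\ qeval (vQ v) p1 = 0, qeval (vQ v) p2 = 0, qeval (vQ v) p3 = 0 & qeval (vQ v) p4 = 0],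
      ([/\ p1 != p2, p1 != p3 & p1 != p4] /\ [/\ p2 != p3, p2 != p4 & p3 != p4]) &
      [/\ Jq (vP v) (vQ v) p1 != 0, Jq (vP v) (vQ v) p2 != 0,
          Jq (vP v) (vQ v) p3 != 0 & Jq (vP v) (vQ v) p4 != 0]].
Proof.
case=> /uniq4 Hu Hs.
have [[a1 b1] c1] : Defs.singular v p1 /\ Defs.nondegenerate v p1 by apply: Hs; rewrite !inE eqxx ?orbT.
have [[a2 b2] c2] : Defs.singular v p2 /\ Defs.nondegenerate v p2 by apply: Hs; rewrite !inE eqxx ?orbT.
have [[a3 b3] c3] : Defs.singular v p3 /\ Defs.nondegenerate v p3 by apply: Hs; rewrite !inE eqxx ?orbT.
have [[a4 b4] c4] : Defs.singular v p4 /\ Defs.nondegenerate v p4 by apply: Hs; rewrite !inE eqxx ?orbT.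
by move: c1 c2 c3 c4; rewrite /Defs.nondegenerate !detE.
Qed.

Theorem lemma4p1 (R : numClosedFieldType) (v w : qvf R)
  (p1 p2 p3 p4 q4 : R * R) :
  four_nondeg_sing v p1 p2 p3 p4 ->
  four_nondeg_sing w p1 p2 p3 q4 ->
  (forall p, p \in [:: p1; p2; p3] ->
     \tr (Dv v p) = \tr (Dv w p) /\ \det (Dv v p) = \det (Dv w p)) ->
  p4 = q4 /\ \tr (Dv v p4) = \tr (Dv w q4) /\ \det (Dv v p4) = \det (Dv w q4).
Proof.
move=> /unpack [[f1 f2 f3 f4] [g1 g2 g3 g4] [[d12 d13 d14] [d23 d24 d34]] [J1 J2 J3 J4]].
move=> /unpack [[f1' f2' f3' f4'] [g1' g2' g3' g4'] [[_ _ d14'] [_ d24' d34']] [J1' J2' J3' J4']].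
move=> Heq.
have [|t1 e1] := Heq p1; first by rewrite !inE eqxx.
have [|t2 e2] := Heq p2; first by rewrite !inE eqxx ?orbT.
have [|t3 e3] := Heq p3; first by rewrite !inE eqxx ?orbT.
rewrite !trE !detE in t1 t2 t3 e1 e2 e3 *.
have [S1 Sx Sy St] := EJsum f1 f2 f3 f4 g1 g2 g3 g4 d12 d13 d14 d23 d24 d34 J1 J2 J3 J4.
have [S1' Sx' Sy' St'] := EJsum f1' f2' f3' f4' g1' g2' g3' g4' d12 d13 d14' d23 d24' d34' J1' J2' J3' J4'.
rewrite -e1 -e2 -e3 -t1 -t2 -t3 in S1' Sx' Sy' St'.
set Jv := Jq (vP v) (vQ v) in S1 Sx Sy St S1' Sx' Sy' St' J4 *.
set Jw := Jq (vP w) (vQ w) in S1' Sx' Sy' St' J4' *.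
have I4 : (Jv p4)^-1 = (Jw q4)^-1.
  apply/eqP; rewrite -subr_eq0; apply/eqP.
  by apply: (eq0T (y := ((Jv p1)^-1 + (Jv p2)^-1 + (Jv p3)^-1 + (Jv p4)^-1) -
     ((Jv p1)^-1 + (Jv p2)^-1 + (Jv p3)^-1 + (Jw q4)^-1))); [rewrite S1 S1' subr0 | ring].
have inz : (Jw q4)^-1 != 0 by rewrite invr_eq0.
have X4 : p4.1 = q4.1.
  apply: (mulIf inz); rewrite -[in LHS]I4.
  apply/eqP; rewrite -subr_eq0; apply/eqP.
  apply: (eq0T (y := (p1.1 / Jv p1 + p2.1 / Jv p2 + p3.1 / Jv p3 + p4.1 / Jv p4) -
     (p1.1 / Jv p1 + p2.1 / Jv p2 + p3.1 / Jv p3 + q4.1 / Jw q4))); first by rewrite Sx Sx' subr0.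
  by ring.
have Y4 : p4.2 = q4.2.
  apply: (mulIf inz); rewrite -[in LHS]I4.
  apply/eqP; rewrite -subr_eq0; apply/eqP.
  apply: (eq0T (y := (p1.2 / Jv p1 + p2.2 / Jv p2 + p3.2 / Jv p3 + p4.2 / Jv p4) -
     (p1.2 / Jv p1 + p2.2 / Jv p2 + p3.2 / Jv p3 + q4.2 / Jw q4))); first by rewrite Sy Sy' subr0.
  by ring.
have P4 : p4 = q4 by rewrite [p4]surjective_pairing [q4]surjective_pairing X4 Y4.
subst q4.
have JJ : Jv p4 = Jw p4 by apply: invr_inj.
split=> //; split=> //.
apply: (mulIf inz); rewrite -[in LHS]I4.
apply/eqP; rewrite -subr_eq0; apply/eqP.
apply: (eq0T (y := ((qdx (vP v) p1 + qdy (vQ v) p1) / Jv p1 + (qdx (vP v) p2 + qdy (vQ v) p2) / Jv p2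
   + (qdx (vP v) p3 + qdy (vQ v) p3) / Jv p3 + (qdx (vP v) p4 + qdy (vQ v) p4) / Jv p4) -
   ((qdx (vP v) p1 + qdy (vQ v) p1) / Jv p1 + (qdx (vP v) p2 + qdy (vQ v) p2) / Jv p2
   + (qdx (vP v) p3 + qdy (vQ v) p3) / Jv p3 + (qdx (vP w) p4 + qdy (vQ w) p4) / Jw p4)));
  first by rewrite St St' subr0.
by ring.
Qed.
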